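(* If $X\subset\mathbb{R}^N$ is a nondegenerate continuum and $x\in X$, then every tangent $T\in\mathrm{Tan}(X,x)$ has the property that each connected component of $T$ is unbounded.
   Context: For nonempty $A,B$, $\mathrm{exc}(A,B)=\sup_{a\in A}\inf_{b\in B}|a-b|$; closed sets $X_m$ converge to a closed set $X$ (Attouch–Wets) if for every $r>0$, $\mathrm{exc}(X_m\cap\overline{B}(\mathbf{0},r),X)\to0$ and $\mathrm{exc}(X\cap\overline{B}(\mathbf{0},r),X_m)\to0$. A closed set $T\ni\mathbf{0}$ is a tangent of a closed set $X$ at $x\in X$ if $r_m^{-1}(X-x)\to T$ in this topology for some $r_m\downarrow0$; $\mathrm{Tan}(X,x)$ is the set of tangents. A continuum is a compact connected set; nondegenerate means it has more than one point. *)

(* Defs.v *)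
From HB Require Import structures.
From mathcomp Require Import all_boot all_order all_algebra.
From mathcomp Require Import all_classical all_reals all_analysis.
Set Implicit Arguments. Unset Strict Implicit. Unset Printing Implicit Defensive.
Import Order.TTheory GRing.Theory Num.Theory.
Import numFieldNormedType.Exports.
Local Open Scope classical_set_scope.
Local Open Scope ring_scope.

(* Points of R^N are row vectors 'rV[R]_N (product topology = Euclidean topology). *)
Section Defs.
Variables (R : realType) (N : nat).
Notation V := 'rV[R]_N.

Definition enorm (v : V) : R := Num.sqrt (\sum_(i < N) v ord0 i ^+ 2).
Definition edist (a b : V) : R := enorm (a - b).

Definition cball0 (r : R) : set V := [set y | enorm y <= r].

Definition exc (A B : set V) : \bar R :=
  ereal_sup [set ereal_inf [set (edist a b)%:E | b in B] | a in A].

(* exc(A_m, B_m) -> 0 ; an empty A_m (sup = -oo) is treated as excess 0 *)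
Definition exc_to0 (A B : nat -> set V) : Prop :=
  forall eps : R, 0 < eps ->
    \forall m \near \oo, (exc (A m) (B m) <= eps%:E)%E.

Definition AW_cvg (Xm : nat -> set V) (X : set V) : Prop :=
  forall r : R, 0 < r ->
    exc_to0 (fun m => Xm m `&` cball0 r) (fun=> X) /\
    exc_to0 (fun=> X `&` cball0 r) Xm.

Definition blowup (X : set V) (x : V) (r : R) : set V :=
  [set r^-1 *: (y - x) | y in X].

Definition is_tangent (X : set V) (x : V) (T : set V) : Prop :=
  topology_structure.closed T /\ T 0 /\
  exists rm : nat -> R,
    (forall m, 0 < rm m) /\ (forall m, rm m.+1 <= rm m) /\ rm @ \oo --> 0 /\
    AW_cvg (fun m => blowup X x (rm m)) T.

Definition Tan (X : set V) (x : V) : set (set V) := [set T | is_tangent X x T].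

Definition ebounded (A : set V) : Prop := exists M : R, forall y, A y -> enorm y <= M.

Definition nondeg_continuum (X : set V) : Prop :=
  compact X /\ connected X /\ exists y z, X y /\ X z /\ y <> z.

End Defs.

(* Main.v *)
Require Import Defs.
From HB Require Import structures.
From mathcomp Require Import all_boot all_order all_algebra.
From mathcomp Require Import all_classical all_reals all_analysis.
Import numFieldNormedType.Exports.
Local Open Scope classical_set_scope.
Local Open Scope ring_scope.
From mathcomp Require Import lra.
Set Implicit Arguments. Unset Strict Implicit. Unset Printing Implicit Defensive.
Import Order.TTheory GRing.Theory Num.Theory.
Section Gen.
Variables (R : realType) (V : normedModType R).

Lemma sep_delta (P Z : set V) : compact P -> closed Z -> P `&` Z = set0 ->
  exists2 d : R, 0 < d & forall p q, P p -> Z q -> d <= `|p - q|.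
Proof.
move=> cP cZ PZ.
have H : \forall d \near 0^'+, P `<=` (fun x => forall q, Z q -> d <= `|x - q|).
  apply: (proj1 (compact_near_coveringP P) cP) => x Px.
  have nZx : (~` Z) x by move=> Zx; have : (P `&` Z) x by []; rewrite PZ.
  have := closed_openC cZ; rewrite openE => /(_ x nZx) /nbhs_ballP [r r0 rZ].
  exists (ball x (r/2), [set d : R | d < r/2]); first split => /=.
  - by apply: nbhsx_ballx; rewrite divr_gt0.
  - by apply: nbhs_right_lt; rewrite divr_gt0.
  move=> [y d] [/= Bxy Hd] q Zq.
  have rq : r <= `|x - q|.
    rewrite leNgt; apply/negP => h; apply: (rZ q) => //.
    by rewrite -ball_normE /ball_ /=.
  move: Bxy; rewrite -ball_normE /ball_ /= => xy.
  have := ler_normD (x - y) (y - q); rewrite addrA subrK => tri.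
  lra.
have [d [d0 Hd]] := filter_ex (filterI (nbhs_right_gt (0:R)) H).
by exists d => // p q Pp Zq; apply: Hd.
Qed.

Lemma open_nbhd (E : set V) (e : R) : open [set y | exists2 a, E a & `|y - a| < e].
Proof.
rewrite openE => y [a Ea ya]; apply/nbhs_ballP.
exists (e - `|y - a|); first by rewrite /= subr_gt0.
move=> z; rewrite -ball_normE /ball_ /= => yz; exists a => //.
have := ler_normD (z - y) (y - a); rewrite addrA subrK => tri.
have : `|z - y| = `|y - z| by exact: distrC.
lra.
Qed.

Section Quasi.
Variables (K : set V) (t : V).
Hypotheses (cK : compact K) (clK : closed K) (Kt : K t).

Definition Cl (U : set V) := [/\ U `<=` K, closed U, closed (K `\` U) & U t].
Definition Qc := [set y | K y /\ forall U, Cl U -> U y].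

Lemma ClK : Cl K.
Proof. by split => //; rewrite setDv; exact: closed0. Qed.

Lemma ClI U W : Cl U -> Cl W -> Cl (U `&` W).
Proof.
move=> [UK cU cKU Ut] [WK cW cKW Wt]; split.
- by move=> y [/UK].
- exact: closedI.
- by rewrite setDIr; exact: closedU.
- by [].
Qed.

Lemma avoid (A : set V) : compact A -> A `&` Qc = set0 ->
  exists W, Cl W /\ W `&` A = set0.
Proof.
move=> cA AQ.
pose F := filter_from Cl (fun W => [set U | Cl U /\ U `<=` W]).
have FF : Filter F.
  apply: filter_from_filter; first by exists K; exact: ClK.
  move=> i j Ci Cj; exists (i `&` j); first exact: ClI.
  by move=> U [CU Uij]; split; split => // y /Uij [].
have H : \forall U \near F, A `<=` (fun x => ~ U x).
  apply: (proj1 (compact_near_coveringP A) cA) => x Ax.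
  have [U0 [CU0 nU0x]] : exists U0, Cl U0 /\ ~ U0 x.
    have [Kx|nKx] := pselect (K x); last by exists K; split => //; exact: ClK.
    apply: contrapT => hn; have : (A `&` Qc) x.
      split => //; split => // U CU; apply: contrapT => nU; apply: hn.
      by exists U.
    by rewrite AQ.
  have : nbhs x (~` U0).
    by have := closed_openC (let: And4 _ c _ _ := CU0 in c); rewrite openE; apply.
  move=> nb; exists (~` U0, [set U | Cl U /\ U `<=` U0]); first split => //.
    by exists U0.
  by move=> [y U] [/= nU0y [_ UU0]] /UU0.
case: H => W CW BW; exists W; split => //.
apply/seteqP; split => // y [Wy Ay].
by have := BW W (conj CW (@subset_refl _ W)) y Ay.
Qed.


Lemma Qc_closed : closed Qc.
Proof.
move=> y cy; split.
  by apply: clK; apply: closureS cy => z [].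
move=> U CU; have [UK cU _ _] := CU; apply: cU; apply: closureS cy => z [_ H].
exact: H.
Qed.

Lemma Qc_t : Qc t.
Proof. by split => // U []. Qed.

Lemma Qc_connected : connected Qc.
Proof.
apply/connectedP => E [En QE [s1 s2]].
have EQ b : E b `<=` Qc by rewrite QE; case: b => y Ey; [right|left].
have Ecl b : closed (E b).
  move=> y cy; have Qy : Qc y by apply: Qc_closed; exact: closureS cy.
  move: Qy; rewrite QE; case: b cy => cy [] // Ey.
  - by have : (E false `&` closure (E true)) y by []; rewrite s2.
  - by have : (closure (E false) `&` E true) y by []; rewrite s1.
have Ecp b : compact (E b).
  apply: subclosed_compact (Ecl b) cK _ => y /EQ []; done.
have E01 : E false `&` E true = set0.
  apply/seteqP; split => // y [y0 y1].
  have : (closure (E false) `&` E true) y by split => //; exact: subset_closure.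
  by rewrite s1.
have [d d0 Hd] := sep_delta (Ecp false) (Ecl true) E01.
pose G b := [set y | exists2 a, E b a & `|y - a| < d / 2].
have Gdis y : G false y -> G true y -> False.
  move=> [a Ea ya] [c Ec yc]; have := Hd a c Ea Ec.
  have := ler_normD (a - y) (y - c); rewrite addrA subrK => tri.
  have : `|a - y| = `|y - a| by exact: distrC.
  lra.
have Gop b : open (G b) by exact: open_nbhd.
pose A := K `&` ~` (G false `|` G true).
have cA : compact A.
  apply: compact_closedI => //; rewrite closedC; exact: openU.
have AQ : A `&` Qc = set0.
  apply/seteqP; split => // y [[_ nG] Qy]; apply: nG.
  have : Qc y by [].
  rewrite QE => -[Ey|Ey]; [left|right]; exists y => //; rewrite subrr normr0;
    by rewrite divr_gt0.
have [W [[WK cW cKW Wt] WA]] := avoid cA AQ.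
have WG y : W y -> G false y \/ G true y.
  move=> Wy; apply: contrapT => nG.
  have : (W `&` A) y by split => //; split => //; exact: WK.
  by rewrite WA.
have key b : E b t -> False.
  move=> Ebt.
  have [e Ee] := En (~~ b).
  have Gb y : G b y -> G (~~ b) y -> False by case: b {Ebt Ee} => /=; last exact: Gdis;
    move=> ? ?; apply: (Gdis y).
  have WGe : W `&` G b = W `&` ~` G (~~ b).
    apply/seteqP; split => y [Wy Gy]; split => //.
      by move=> Gy'; exact: (Gb y).
    move: Gy; case: (b) => /= Gy; case: (WG y Wy) => // G'; by exfalso; apply: Gy.
  have CW' : Cl (W `&` G b).
    split.
    - by move=> y [/WK].
    - rewrite WGe; apply: closedI => //; rewrite closedC; exact: Gop.
    - have -> : K `\` (W `&` G b) = (K `\` W) `|` (W `&` ~` G b).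
        apply/seteqP; split => y.
          move=> [Ky nWG]; have [Wy|nWy] := pselect (W y); [right|left] => //.
          by split => // Gy; apply: nWG.
        move=> [[Ky nWy]|[Wy nGy]]; split => //; first by move=> [].
          exact: WK.
        by move=> [].
      apply: closedU => //; apply: closedI => //; rewrite closedC; exact: Gop.
    - by split => //; exists t => //; rewrite subrr normr0 divr_gt0.
  have Qe : Qc e by exact: (EQ (~~ b)).
  have [_ /(_ _ CW') [_ Gbe]] := Qe.
  apply: (Gb e Gbe); exists e => //; rewrite subrr normr0 divr_gt0 //.
have : Qc t by exact: Qc_t.
by rewrite QE => -[]; [exact: key|exact: key].
Qed.

End Quasi.
Lemma quasi_sep (K : set V) (t : V) (S : set V) : compact K -> closed K -> K t ->
  closed S -> S `<=` K ->
  (forall D, connected D -> D t -> D `<=` K -> D `&` S = set0) ->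
  exists U, Cl K t U /\ U `&` S = set0.
Proof.
move=> cK clK Kt clS SK HD.
apply: avoid => //; first exact: subclosed_compact clS cK SK.
rewrite setIC; apply: HD.
- exact: Qc_connected.
- exact: Qc_t.
- by move=> y [].
Qed.
End Gen.
Section Norms.
Variables (R : realType) (N : nat).
Implicit Types v : 'rV[R]_N.

Lemma entry_le_norm v i : `|v ord0 i| <= `|v|.
Proof.
have /mapP[j Hj ->] : `|v ord0 i| \in [seq `|v x.1 x.2| | x : 'I_1 * 'I_N].
  by apply/mapP; exists (ord0, i) => //=; rewrite mem_enum.
have -> : `|v| = mx_norm v by [].
by rewrite mx_normrE; apply/bigmax_geP; right => /=; exists j.
Qed.

Lemma norm_le_enorm v : `|v| <= enorm v.
Proof.
have -> : `|v| = mx_norm v by [].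
rewrite mx_normrE; apply: bigmax_le => [|[i j] _].
  exact: sqrtr_ge0.
rewrite (ord1 i) /= /enorm -sqrtr_sqr; apply: ler_wsqrtr.
rewrite (bigD1 j) //= lerDl; apply: sumr_ge0 => k _; exact: sqr_ge0.
Qed.

Lemma enorm_le_norm v : enorm v <= (N%:R + 1) * `|v|.
Proof.
have s0 : 0 <= `|v| by [].
have h : \sum_(i < N) v ord0 i ^+ 2 <= ((N%:R + 1) * `|v|) ^+ 2.
  apply: le_trans (_ : \sum_(i < N) `|v| ^+ 2 <= _).
    apply: ler_sum => i _; have := entry_le_norm v i.
    rewrite -(real_normK (num_real (v ord0 i))).
    have := normr_ge0 (v ord0 i); nra.
  rewrite sumr_const card_ord.
  have n0 : 0 <= N%:R :> R by [].
  rewrite -mulr_natr; nra.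
apply: le_trans (ler_wsqrtr h) _; rewrite sqrtr_sqr ger0_norm //; apply: mulr_ge0 => //.

Qed.

Lemma enorm_ge0 v : 0 <= enorm v.
Proof. exact: sqrtr_ge0. Qed.
End Norms.

Section Main.
Variables (R : realType) (N : nat).

Lemma exc_pt (A B : set 'rV[R]_N) a (e : R) : 0 < e ->
  (exc A B <= (e/2)%:E)%E -> A a -> exists2 b, B b & Defs.edist a b < e.
Proof.
move=> e0 he Aa.
have h1 : (ereal_inf [set (Defs.edist a b)%:E | b in B] <= (e/2)%:E)%E.
  by apply: le_trans he; apply: ereal_sup_ubound; exists a.
have : (ereal_inf [set (Defs.edist a b)%:E | b in B] < e%:E)%E.
  by apply: le_lt_trans h1 _; rewrite lte_fin; lra.
by move=> /ereal_inf_lt [_ [b Bb <-]]; rewrite lte_fin => h; exists b.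
Qed.

Lemma a1 (x : 'rV[R]_N) : continuous (fun z : 'rV[R]_N => z - x).
Proof. move=> y. exact: (cvgB cvg_id (cvg_cst x)). Qed.
Lemma a2 (x : 'rV[R]_N) r : continuous (fun z : 'rV[R]_N => r *: (z - x)).
Proof. move=> y. exact: (cvgZr (@a1 x y)). Qed.

Lemma blowup_connected (X : set 'rV[R]_N) x r :
  connected X -> connected (blowup X x r).
Proof.
move=> cX; apply: connected_continuous_connected cX _.
apply: continuous_subspaceT; exact: a2.
Qed.

Lemma closed_nle (b : R) : closed [set v : 'rV[R]_N | `|v| <= b].
Proof.
apply: (@closed_comp _ _ (fun v : 'rV[R]_N => `|v|) [set x : R | x <= b]).
  by move=> v _; exact: norm_continuous.
exact: closed_le.
Qed.

Lemma closed_nge (b : R) : closed [set v : 'rV[R]_N | b <= `|v|].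
Proof.
apply: (@closed_comp _ _ (fun v : 'rV[R]_N => `|v|) [set x : R | b <= x]).
  by move=> v _; exact: norm_continuous.
exact: closed_ge.
Qed.

Lemma open_ngt (b : R) : open [set v : 'rV[R]_N | b < `|v|].
Proof.
apply: (@open_comp _ _ (fun v : 'rV[R]_N => `|v|) [set x : R | b < x]).
  by move=> v _; exact: norm_continuous.
exact: open_gt.
Qed.
End Main.

Theorem lemma2p5 (R : realType) (N : nat) (X : set 'rV[R]_N) (x : 'rV[R]_N) :
  nondeg_continuum X -> X x ->
  forall T : set 'rV[R]_N, Tan X x T ->
  forall t, T t -> ~ ebounded (connected_component T t).
Proof.
move=> [cX [connX [y0 [z0 [Xy [Xz yz]]]]]] Xx T [clT [T0 [rm [rpos [rdec [rcvg AW]]]]]] t Tt [M HM].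
have Mt : enorm t <= M by apply: HM; exact: connected_component_refl.
have M0 : 0 <= M by apply: le_trans (enorm_ge0 t) Mt.
pose c := M + 2.
have c0 : 0 < c by rewrite /c; lra.
pose K := T `&` [set v : 'rV[R]_N | `|v| <= c + 1].
pose S := K `&` [set v : 'rV[R]_N | M + 1 <= `|v|].
have clK : closed K by apply: closedI => //; exact: closed_nle.
have cK : compact K.
  apply: bounded_closed_compact clK.
  exists (c + 1); split; first exact: num_real.
  move=> B hB v [_ hv] /=; apply: le_trans hv _; exact: ltW.
have Kt : K t by split => //=; have := norm_le_enorm t; rewrite /c; lra.
have clS : closed S by apply: closedI => //; exact: closed_nge.
have [U [[UK clU clKU Ut] US]] : exists U, Cl K t U /\ U `&` S = set0.
  apply: (quasi_sep cK clK Kt clS) => [v []//|D cD Dt DK].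
  apply/seteqP; split => // v [Dv [_ hv]].
  have : enorm v <= M.
    apply: HM; apply: (connected_component_max Dt _ cD) => //.
    by move=> w /DK [].
  have := norm_le_enorm v; move: hv => /= hv; lra.
have cU : compact U := subclosed_compact clU cK UK.
have UKU : U `&` (K `\` U) = set0 by apply/seteqP; split=> // v [? []].
have [d d0 Hd] := sep_delta cU clKU UKU.
have [e [e0 ed e1]] : exists e : R, [/\ 0 < e, e <= d/2 & e <= 1/2].
  by case: (leP d 1) => hd; [exists (d/2) | exists (1/2)]; split; lra.
have [w [Xw wx]] : exists w, X w /\ w != x.
  case: (eqVneq y0 x) => [yx|yx]; last by exists y0.
  exists z0; split => //; apply/eqP => zx; by apply: yz; rewrite yx zx.
have wpos : 0 < `|w - x| by rewrite normr_gt0 subr_eq0.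
pose r := (N%:R + 1) * c.
have N0 : 0 <= N%:R :> R by [].
have r0 : 0 < r by rewrite /r; nra.
have [AW1 AW2] := AW r r0.
have e20 : 0 < e / 2 by lra.
have H1 := AW1 _ e20.
have H2 := AW2 _ e20.
have wc0 : 0 < `|w - x| / c by rewrite divr_gt0.
have H3 : \forall m \near \oo, `|0 - rm m| < `|w - x| / c.
  by apply: (@cvgr_dist_lt _ _ _ _ _ rm 0 rcvg _ wc0).
have [m [[h1 h2] h3]] := filter_ex (filterI (filterI H1 H2) H3).
move: h1 h2 => /= h1 h2.
pose Xm := blowup X x (rm m).
have cXm : connected Xm by exact: blowup_connected.
pose O1 := [set v : 'rV[R]_N | exists2 p, U p & `|v - p| < e].
pose O2 := [set v : 'rV[R]_N | exists2 q, (K `\` U) q & `|v - q| < e]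
  `|` [set v | c < `|v|].
have O12 v : O1 v -> O2 v -> False.
  move=> [p Up hp] [[q [Kq nUq] hq]|hc].
  - have := Hd p q Up (conj Kq nUq).
    have := ler_normD (p - v) (v - q); rewrite addrA subrK => tri.
    have : `|p - v| = `|v - p| by exact: distrC.
    lra.
  - have Sp : ~ (M + 1 <= `|p|).
      move=> hp1; have : (U `&` S) p by split => //; split => //; exact: UK.
      by rewrite US.
    have tri : `|v| <= `|p| + `|v - p|.
      by have := ler_normD p (v - p); rewrite addrCA subrr addr0.
    have {}Sp : `|p| < M + 1 by rewrite ltNge; apply/negP.
    have {}hc : M + 2 < `|v| := hc.
    have k1 := le_lt_trans tri (ltrD Sp hp). have k2 := lt_trans hc k1. move: k2 e1 => /= k2 e1. clear - k2 e1; lra.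
have cover v : Xm v -> O1 v \/ O2 v.
  move=> Xv; have [hc|hc] := leP `|v| c; last by right; right.
  have vr : (Xm `&` cball0 r) v.
    split => //; rewrite /cball0 /=; apply: le_trans (enorm_le_norm v) _.
    by rewrite /r; apply: ler_wpM2l => //; rewrite addr_ge0.
  have [z Tz hz] := exc_pt e0 h1 vr.
  have := norm_le_enorm (v - z); rewrite -/(Defs.edist v z) => hvz.
  have Kz : K z.
    split => //=; have := ler_normD v (z - v); rewrite addrCA subrr addr0 => tri.
    have : `|z - v| = `|v - z| by exact: distrC.
    lra.
  have [Uz|nUz] := pselect (U z).
    by left; exists z => //; lra.
  by right; left; exists z => //; lra.
have [a Xma O1a] : exists2 a, Xm a & O1 a.
  have tr : (T `&` cball0 r) t.
    split => //; rewrite /cball0 /=; apply: le_trans Mt _.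
    rewrite /r /c; nra.
  have [a Xa ha] := exc_pt e0 h2 tr.
  exists a => //; exists t => //.
  have := norm_le_enorm (t - a); rewrite -/(Defs.edist t a) distrC; lra.
have [b Xmb O2b] : exists2 b, Xm b & O2 b.
  exists ((rm m)^-1 *: (w - x)); first by exists w.
  right => /=; rewrite normrZ ger0_norm; last by rewrite invr_ge0 ltW.
  have rmp := rpos m.
  move: h3; rewrite sub0r normrN ger0_norm ?ltW // => h3.
  rewrite mulrC ltr_pdivlMr //.
  by rewrite ltr_pdivlMr // in h3; rewrite mulrC.
have O1open : open O1 by exact: open_nbhd.
have O2open : open O2 by apply: openU; [exact: open_nbhd | exact: open_ngt].
have eqB : Xm `&` O1 = Xm.
  apply: cXm.
  - by exists a.
  - by exists O1.
  - exists (~` O2); first by rewrite closedC.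
    apply/seteqP; split => v [Xv Ov]; split => //.
      by move=> O2v; exact: (O12 v).
    by case: (cover v Xv) => // /Ov.
have : (Xm `&` O1) b by rewrite eqB.
by move=> [_ /O12]; apply.
Qed.
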